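(* For every positive integer $t$ there is a constant $c(t)>0$ such that the following holds. Let $d\ge1$, $U=\{u_1,\dots,u_d\}$ the vertex set of a complete graph, $L$ a $t$-feasible list assignment of $U$, and let $A$ be the set of constrained vertices $u$ with $|L(u)|\le 2(3t+2)$. Let $\alpha,\beta\in\Omega^L_U$ and let $\xi_A$ be an injective map $A\to[d+1]$ with $\xi_A(u)\in L(u)$ for all $u\in A$, such that $\alpha|_A$ and $\xi_A$ differ on at most one vertex, and $\xi_A$ and $\beta|_A$ differ on at most one vertex. Then there are at least $c(t)|\Omega^L_U|$ colourings $\xi\in\Omega^L_U$ with $\xi|_A=\xi_A$ such that both $(\alpha,\xi)$ and $(\xi,\beta)$ are good pairs.
   Context: Lists $L(u)\subseteq[d+1]$; an $L$-colouring is an injective $\alpha:U\to[d+1]$ with $\alpha(u)\in L(u)$; $\Omega^L_U$ is their set. $L$ is $t$-feasible if $|L(u_i)|\ge t+1$ for $i\in[t]$ and $|L(u_i)|=d+1$ for $i\in[d]\setminus[t]$. A vertex $u$ is free if $|L(u)|=d+1$ and constrained otherwise. Add an extra vertex $w$ (regarded as free) and extend each $\alpha\in\Omega^L_U$ by letting $\alpha(w)$ be the unique colour of $[d+1]$ not in $\alpha(U)$. For $\alpha,\beta\in\Omega^L_U$ let $f(\alpha,\beta)$ be the permutation of $U\cup\{w\}$ with $f(x)=y$ iff $\alpha(x)=\beta(y)$; $(\alpha,\beta)$ is a good pair if $f(\alpha,\beta)$ has no cycle of length at least $2$ all of whose vertices are constrained. *)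

(* Defs.v *)
From mathcomp Require Import all_boot all_order all_algebra.
Set Implicit Arguments. Unset Strict Implicit. Unset Printing Implicit Defensive.

(* Vertices U = {u_1,...,u_d} are 'I_d (u_{i+1} is i); colours [d+1] are 'I_d.+1.
   A list assignment is L : 'I_d -> {set 'I_d.+1}. *)

Section Defs.
Variable d : nat.
Implicit Types (L : 'I_d -> {set 'I_d.+1}) (a b : {ffun 'I_d -> 'I_d.+1}).

Definition feasible (t : nat) L : Prop :=
  forall i : 'I_d, if i < t then t.+1 <= #|L i| else #|L i| == d.+1.

Definition is_Lcol L a : bool := injectiveb a && [forall u, a u \in L u].

Definition Omega L : {set {ffun 'I_d -> 'I_d.+1}} := [set a | is_Lcol L a].

(* constrained / free vertices; the extra vertex w (= None) is free *)
Definition constrained L (x : option 'I_d) : bool :=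
  if x is Some u then #|L u| != d.+1 else false.

(* extension of a colouring to U + {w}: w gets the colour not in alpha(U) *)
Definition missing a : 'I_d.+1 := odflt ord0 [pick c | c \notin codom a].

Definition ext a (x : option 'I_d) : 'I_d.+1 :=
  if x is Some u then a u else missing a.

Definition fperm a b (x : option 'I_d) : option 'I_d :=
  odflt x [pick y | ext b y == ext a x].

Definition good_pair L a b : Prop :=
  ~ exists s : seq (option 'I_d),
      [/\ 2 <= size s, uniq s, fcycle (fperm a b) s & all (constrained L) s].

Definition Aset (t : nat) L : {set 'I_d} :=
  [set u | (#|L u| != d.+1) && (#|L u| <= 2 * (3 * t + 2))].

End Defs.

(* Main.v *)
Require Import Defs.
From Stdlib Require Import Classical.
From mathcomp Require Import all_boot all_order all_algebra all_fingroup.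
From mathcomp Require Import zify.
Set Implicit Arguments. Unset Strict Implicit. Unset Printing Implicit Defensive.

Lemma cyc_step (T : eqType) (f : T -> T) (s : seq T) x :
  (2 <= size s)%N -> uniq s -> fcycle f s -> x \in s -> f x \in s /\ f x != x.
Proof.
move=> s2 us cs xs.
have /eqP fx := next_cycle cs xs.
rewrite fx mem_next; split => //.
rewrite next_nth xs.
case: s s2 us cs xs {fx} => [|y p] // s2 us _ xs.
have ix : (index x (y :: p) < size (y :: p))%N by rewrite index_mem.
have [lt|ge] := ltnP (index x (y :: p)) (size p).
- apply/eqP => E.
  have : nth y (y :: p) (index x (y :: p)).+1 = nth y (y :: p) (index x (y :: p)).
    by rewrite /= E nth_index.
  by move/eqP; rewrite nth_uniq //= ?ltnS // eqn_leq ltnn.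
- rewrite nth_default //; apply/eqP => E.
  have ie : index x (y :: p) = size p by move: ix => /=; rewrite ltnS => ix; apply/eqP; rewrite eqn_leq ix ge.
  have : nth y (y :: p) 0 == nth y (y :: p) (index x (y :: p)) by rewrite nth_index // E.
  rewrite (nth_uniq y _ _ us) ?ie //= => /eqP E2.
  by move: s2; rewrite /= -E2.
Qed.

Lemma bad_step d (L : 'I_d -> {set 'I_d.+1}) (a b : {ffun 'I_d -> 'I_d.+1}) s x :
  (2 <= size s)%N -> uniq s -> fcycle (fperm a b) s -> all (constrained L) s -> x \in s ->
  exists u v, [/\ x = Some u, fperm a b x = Some v, fperm a b x \in s &
     [/\ constrained L (Some u), constrained L (Some v), b v = a u & u != v]].
Proof.
move=> s2 us cs al xs.
have [fs fx] := cyc_step s2 us cs xs.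
have cx : constrained L x by move/allP: al; apply.
have cfx : constrained L (fperm a b x) by move/allP: al; apply.
case: x cx xs fs fx cfx => [u|] // cu xs.
rewrite /fperm; case: pickP => [y /eqP Hy | none] /=; last by rewrite eqxx.
case: y Hy => [v|] //= Hy fs fx cv.
exists u, v; split => //; split => //.
by apply: contraNneq fx => ->.
Qed.

Lemma bad_chain d (L : 'I_d -> {set 'I_d.+1}) (a b : {ffun 'I_d -> 'I_d.+1}) :
  ~ good_pair L a b -> exists u0 u1 u2 u3,
   [/\ [/\ constrained L (Some u0), constrained L (Some u1), constrained L (Some u2) & constrained L (Some u3)],
       [/\ b u1 = a u0, b u2 = a u1 & b u3 = a u2] &
       [/\ u0 != u1, u1 != u2 & u2 != u3]].
Proof.
move=> /NNPP [s [s2 us cs al]].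
case: s s2 us cs al => [|x0 p] // s2 us cs al.
have x0s : x0 \in x0 :: p by rewrite mem_head.
have [u0 [u1 [E0 E1 s1 [c0 c1 h1 n1]]]] := bad_step s2 us cs al x0s.
have [u1' [u2 [E1' E2 s2' [c1' c2 h2 n2]]]] := bad_step s2 us cs al s1.
have eu : u1' = u1 by move: E1'; rewrite E1 => -[]. subst u1'.
have [u2' [u3 [E2' E3 s3 [c2' c3 h3 n3]]]] := bad_step s2 us cs al s2'.
have eu : u2' = u2 by move: E2'; rewrite E2 => -[]. subst u2'.
by exists u0, u1, u2, u3.
Qed.

Lemma perm_onS' (T : finType) (A B : {set T}) (p : {perm T}) :
  A \subset B -> perm_on A p -> perm_on B p.
Proof. by move=> AB pA; apply: subset_trans pA AB. Qed.

Lemma perm_ext (I T : finType) (B : {set I}) (C : {set T}) (g h : I -> T) :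
 {in B &, injective g} -> {in B &, injective h} ->
 (forall u, u \in B -> h u != g u -> (g u \in C) && (h u \in C)) ->
 exists p : {perm T}, perm_on C p /\ forall u, u \in B -> p (g u) = h u.
Proof.
move: {2}#|B| (erefl #|B|) => n; elim: n B => [|n IH] B cB gi hi hC.
  exists 1%g; split; first exact: perm_on1.
  by move=> u uB; move: cB; rewrite (cardD1 u) uB.
have [x xB] : exists x, x \in B by apply/card_gt0P; rewrite cB.
have cB' : #|B :\ x| = n by move: cB; rewrite (cardsD1 x) xB add1n => -[].
have [||| p [pC pE]] := IH (B :\ x) cB'.
- by move=> u v /setD1P[_ uB] /setD1P[_ vB]; apply: gi.
- by move=> u v /setD1P[_ uB] /setD1P[_ vB]; apply: hi.
- by move=> u /setD1P[_ uB]; apply: hC.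
exists (p * tperm (p (g x)) (h x))%g; split.
  apply: perm_onM => //.
  have [E|NE] := eqVneq (p (g x)) (h x); first by rewrite E tperm1 perm_on1.
  apply: (perm_onS' (A := [set p (g x); h x])); last exact: tperm_on.
  have [hg|hg] := eqVneq (h x) (g x).
    have gxC : g x \in C.
      by have := pC; rewrite /perm_on => /subsetP; apply; rewrite inE; rewrite hg in NE.
    by apply/subsetP => z; rewrite !inE => /orP[]/eqP->; rewrite ?hg ?perm_closed.
  have /andP[gxC hxC] := hC x xB hg.
  by apply/subsetP => z; rewrite !inE => /orP[]/eqP->; rewrite ?perm_closed.
move=> u uB; rewrite permM.
have [->|ux] := eqVneq u x; first by rewrite tpermL.
have uB' : u \in B :\ x by rewrite !inE ux.
rewrite (pE u uB') tpermD //.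
- rewrite -(pE u uB') (inj_eq perm_inj); apply/eqP => E.
  by move: ux; rewrite (gi _ _ xB uB E) eqxx.
- apply/eqP => E; by move: ux; rewrite (hi _ _ xB uB E) eqxx.
Qed.

Lemma choose_inj (I T : finType) (t0 : T) (D : {set I}) (X : {set T}) (Lf : I -> {set T}) :
 (forall y, y \in D -> #|D| + #|X| < #|Lf y|) ->
 exists tau : I -> T, (forall y, y \in D -> tau y \in Lf y /\ tau y \notin X) /\ {in D &, injective tau}.
Proof.
move: {2}#|D| (erefl #|D|) => n; elim: n D => [|n IH] D cD HL.
  exists (fun _ => t0); split; [move=> u uD | move=> u v uD];
  by move: cD; rewrite (cardD1 u) uD.
have [x xD] : exists x, x \in D by apply/card_gt0P; rewrite cD.
have cD' : #|D :\ x| = n by move: cD; rewrite (cardsD1 x) xD add1n => -[].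
have [|tau0 [t0P t0I]] := IH (D :\ x) cD'.
  move=> y /setD1P[_ yD]; apply: leq_ltn_trans (HL y yD).
  by rewrite leq_add2r cD cD'.
set Y := X :|: tau0 @: (D :\ x).
have : ~~ (Lf x \subset Y).
  apply/negP => /subset_leq_card sub.
  have := HL x xD; rewrite ltnNge; move/negP; apply.
  apply: leq_trans sub _; apply: leq_trans (leq_of_leqif (leq_card_setU _ _)) _.
  rewrite addnC leq_add2r; apply: leq_trans (leq_imset_card _ _) _.
  by rewrite cD cD'.
case/subsetPn => c cL cY.
exists (fun y => if y == x then c else tau0 y); split.
  move=> y yD; case: eqP => [->|yx].
    by split => //; apply: contra cY => cX; rewrite inE cX.
  by apply: t0P; rewrite !inE yD andbT; apply/eqP.
move=> u v uD vD /=.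
case: eqP => [->|ux]; case: eqP => [->|vx] // E.
- have vD' : v \in D :\ x by rewrite !inE vD andbT; apply/eqP.
  by move: cY; rewrite E /Y inE (imset_f tau0 vD') orbT.
- have uD' : u \in D :\ x by rewrite !inE uD andbT; apply/eqP.
  by move: cY; rewrite -E /Y inE (imset_f tau0 uD') orbT.
- by apply: t0I => //; rewrite !inE ?uD ?vD andbT; apply/eqP.
Qed.

Lemma disj_le1 (I T : finType) (A : {set I}) (f g : I -> T) u v :
  (#|[set w in A | f w != g w]| <= 1)%N -> u \in A -> v \in A -> u != v ->
  f u = g u \/ f v = g v.
Proof.
move=> c uA vA uv.
have [|fu] := eqVneq (f u) (g u); first by left.
have [|fv] := eqVneq (f v) (g v); first by right.
exfalso.
have : [set u; v] \subset [set w in A | f w != g w].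
  by apply/subsetP => w; rewrite !inE => /orP[]/eqP->; rewrite ?uA ?vA ?fu ?fv.
move/subset_leq_card; rewrite cards2 uv => H.
by move: (leq_trans H c).
Qed.

Lemma card_bigcup_le (I T : finType) (A : {set I}) (F : I -> {set T}) :
  (#|\bigcup_(i in A) F i| <= \sum_(i in A) #|F i|)%N.
Proof.
elim/big_rec2: _ => [|i n S iA h]; first by rewrite cards0.
apply: leq_trans (leq_of_leqif (leq_card_setU _ _)) _.
by rewrite leq_add2l.
Qed.

Lemma card_lt_t d t (B : {set 'I_d}) : (forall u, u \in B -> (u < t)%N) -> (#|B| <= t)%N.
Proof.
move=> Bt.
pose f := fun u : 'I_d => (inord u : 'I_t.+1).
have fi : {in B &, injective f}.
  move=> u v uB vB /(congr1 (@nat_of_ord _)); rewrite /f !inordK; last 2 first.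
  - by apply: leq_trans (Bt v vB) _.
  - by apply: leq_trans (Bt u uB) _.
  by move=> /val_inj.
rewrite -(card_in_imset fi).
have sub : f @: B \subset [set: 'I_t.+1] :\ ord_max.
  apply/subsetP => j /imsetP[u uB ->]; rewrite !inE andbT.
  apply/eqP => /(congr1 (@nat_of_ord _)); rewrite /f inordK /=; last by apply: leq_trans (Bt u uB) _.
  by move=> E; move: (Bt u uB); rewrite E ltnn.
apply: leq_trans (subset_leq_card sub) _.
have := cardsD1 (ord_max : 'I_t.+1) [set: 'I_t.+1].
by rewrite cardsT card_ord inE add1n => -[<-].
Qed.

Import GRing.Theory Num.Theory.
Local Open Scope ring_scope.

Theorem lemma16 :
  forall t : nat, (0 < t)%N ->
  exists c : rat, 0 < c /\
  forall (d : nat) (L : 'I_d -> {set 'I_d.+1}),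
    (1 <= d)%N -> feasible t L ->
    forall (alpha beta xiA : {ffun 'I_d -> 'I_d.+1}),
      alpha \in Omega L -> beta \in Omega L ->
      {in Aset t L &, injective xiA} ->
      (forall u, u \in Aset t L -> xiA u \in L u) ->
      (#|[set u in Aset t L | alpha u != xiA u]| <= 1)%N ->
      (#|[set u in Aset t L | xiA u != beta u]| <= 1)%N ->
      exists S : {set {ffun 'I_d -> 'I_d.+1}},
        c * (#|Omega L|)%:R <= (#|S|)%:R /\
        forall xi, xi \in S ->
          [/\ xi \in Omega L, (forall u, u \in Aset t L -> xi u = xiA u),
               good_pair L alpha xi & good_pair L xi beta].
Proof.
move=> t t0.
pose K := (4 * t + t * (2 * (3 * t + 2)))%N.
exists (1 / (K`!)%:R); split.
  by rewrite divr_gt0 // ltr0n fact_gt0.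
move=> d L d1 feas alpha beta xiA Ha Hb xinj xiL Hda Hdb.
set A := Aset t L.
pose B := [set u | #|L u| != d.+1].
have AB : A \subset B by apply/subsetP => u; rewrite !inE => /andP[].
have Bt : forall u, u \in B -> (u < t)%N.
  move=> u; rewrite inE; have := feas u; case: ifP => // _ /eqP ->.
  by rewrite eqxx.
have cardB : (#|B| <= t)%N by apply: card_lt_t.
have cardA : (#|A| <= t)%N by apply: leq_trans (subset_leq_card AB) cardB.
have full : forall u c, u \notin B -> c \in L u.
  move=> u c; rewrite inE negbK => /eqP E.
  have : L u == setT by rewrite eqEcard subsetT /= cardsT card_ord E.
  by move/eqP->; rewrite inE.
have bigL : forall u, u \in B -> u \notin A -> (2 * (3 * t + 2) < #|L u|)%N.
  move=> u; rewrite /A /Aset !inE => -> /=; by rewrite ltnNge.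
have smallL : forall u, u \in A -> (#|L u| <= 2 * (3 * t + 2))%N.
  by move=> u; rewrite /A /Aset !inE => /andP[].
have OmP : forall g, g \in Omega L -> injective g /\ forall u, g u \in L u.
  by move=> g; rewrite inE /is_Lcol => /andP[/injectiveP ? /forallP ?].
pose X := alpha @: B :|: beta @: B :|: xiA @: A.
have cardX : (#|X| <= 3 * t)%N.
  apply: leq_trans (leq_of_leqif (leq_card_setU _ _)) _.
  have h1 := leq_imset_card alpha B.
  have h2 := leq_imset_card beta B.
  have h3 := leq_imset_card xiA A.
  have h4 := leq_of_leqif (leq_card_setU (alpha @: B) (beta @: B)).
  have H : (#|alpha @: B :|: beta @: B| + #|xiA @: A| <= (#|B| + #|B|) + #|A|)%N.
    by apply: leq_add => //; apply: leq_trans h4 (leq_add h1 h2).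
  apply: leq_trans H _; lia.
have [tau [tauP tauI]] : exists tau : 'I_d -> 'I_d.+1,
    (forall y, y \in B :\: A -> tau y \in L y /\ tau y \notin X) /\ {in B :\: A &, injective tau}.
  apply: choose_inj ord0 _ _ _ _ => y /setDP[yB yA].
  have h1 := bigL y yB yA.
  have h2 : (#|B :\: A| <= #|B|)%N by apply: subset_leq_card; apply: subsetDl.
  move: h1 h2 cardX cardB; move: #|B :\: A| #|X| #|L y| #|B| => a b c e; lia.
pose G := X :|: tau @: (B :\: A).
pose C0 := G :|: \bigcup_(u in A) L u.
have cardC0 : (#|C0| <= K)%N.
  apply: leq_trans (leq_of_leqif (leq_card_setU _ _)) _.
  have h1 := leq_of_leqif (leq_card_setU X (tau @: (B :\: A))).
  have h2 := leq_imset_card tau (B :\: A).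
  have h3 : (#|B :\: A| <= #|B|)%N by apply: subset_leq_card; apply: subsetDl.
  have h4 := card_bigcup_le A L.
  have h5 : (\sum_(u in A) #|L u| <= \sum_(u in A) 2 * (3 * t + 2))%N.
    by apply: leq_sum => u uA; apply: smallL.
  rewrite sum_nat_const in h5.
  have h6 : (#|A| * (2 * (3 * t + 2)) <= t * (2 * (3 * t + 2)))%N by rewrite leq_mul2r cardA orbT.
  have H : (#|X :|: tau @: (B :\: A)| + #|\bigcup_(u in A) L u| <= (#|X| + #|B|) + #|A| * (2 * (3 * t + 2)))%N.
    apply: leq_add; last exact: leq_trans h4 h5.
    by apply: leq_trans h1 _; rewrite leq_add2l; apply: leq_trans h2 h3.
  apply: leq_trans H _; move: cardX cardB h6.
  move: #|X| #|B| (#|A| * (2 * (3 * t + 2)))%N => a b c; rewrite /K; lia.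
have XG : forall c, c \in X -> c \in G by move=> c cX; rewrite inE cX.
have GC : forall c, c \in G -> c \in C0 by move=> c cX; rewrite inE cX.
pose tgt (g : {ffun 'I_d -> 'I_d.+1}) u := if u \in A then xiA u else if g u \in G then tau u else g u.
have tgtA : forall g u, u \in A -> tgt g u \in X.
  by move=> g u uA; rewrite /tgt uA !inE (imset_f xiA uA) orbT.
have tgtN : forall g u, u \in B -> u \notin A -> (tgt g u \notin X) && ((tgt g u \in G) == (g u \in G)).
  move=> g u uB uA; have uBA : u \in B :\: A by rewrite inE uA uB.
  rewrite /tgt (negbTE uA); case: ifP => gG.
    by rewrite (tauP u uBA).2 /= inE (imset_f tau uBA) orbT.
  by rewrite gG andbT; apply: contraFN gG; apply: XG.
have tgtI : forall g, g \in Omega L -> {in B &, injective (tgt g)}.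
  move=> g /OmP[gi gL] u v uB vB.
  case uA: (u \in A); case vA: (v \in A).
  - by rewrite /tgt uA vA; apply: xinj.
  - move=> E; have := tgtA g u uA; rewrite E.
    by case/andP: (tgtN g v vB (negbT vA)) => /negbTE ->.
  - move=> E; have := tgtA g v vA; rewrite -E.
    by case/andP: (tgtN g u uB (negbT uA)) => /negbTE ->.
  - move=> E.
    have /andP[_ /eqP hu] := tgtN g u uB (negbT uA).
    have /andP[_ /eqP hv] := tgtN g v vB (negbT vA).
    have uBA : u \in B :\: A by rewrite inE uA uB.
    have vBA : v \in B :\: A by rewrite inE vA vB.
    move: E; rewrite /tgt uA vA.
    case: ifP => gu; case: ifP => gv.
    + by apply: tauI.
    + by move=> E; move: gv; rewrite -E /G inE (imset_f tau uBA) orbT.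
    + by move=> E; move: gu; rewrite E /G inE (imset_f tau vBA) orbT.


    + by apply: gi.
have tgtC : forall g, g \in Omega L -> forall u, u \in B -> tgt g u != g u ->
    (g u \in C0) && (tgt g u \in C0).
  move=> g /OmP[gi gL] u uB.
  case uA: (u \in A).
    move=> _; apply/andP; split; last by apply: GC; apply: XG; apply: tgtA.
    by rewrite inE; apply/orP; right; apply/bigcupP; exists u.
  rewrite /tgt uA; case: ifP => gG; last by rewrite eqxx.
  have uBA : u \in B :\: A by rewrite inE uA uB.
  by rewrite !GC // inE (imset_f tau uBA) orbT.
have tgtL : forall g, g \in Omega L -> forall u, tgt g u \in L u.
  move=> g /OmP[gi gL] u; rewrite /tgt.
  case: ifP => uA; first exact: xiL.
  case: ifP => // gG.
  case uB: (u \in B); last by apply: full; rewrite uB.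
  by case: (tauP u _) => //; rewrite inE uA uB.
pose pg (g : {ffun 'I_d -> 'I_d.+1}) := odflt 1%g [pick p : {perm 'I_d.+1} | perm_on C0 p && [forall u in B, p (g u) == tgt g u]].
have pgP : forall g, g \in Omega L ->
    perm_on C0 (pg g) /\ forall u, u \in B -> pg g (g u) = tgt g u.
  move=> g gO; rewrite /pg; case: pickP => [p /andP[pC /forallP H] | none] /=.
    by split => // u uB; apply/eqP; move: (H u); rewrite uB.
  have gI : {in B &, injective g} by move=> u v _ _; apply: (OmP g gO).1.
  have [p [pC pE]] := perm_ext gI (tgtI g gO) (tgtC g gO).
  have := none p; rewrite pC /=; move/negbT/negP; case.
  by apply/forallP => u; apply/implyP => uB; rewrite pE.
pose Phi (g : {ffun 'I_d -> 'I_d.+1}) := [ffun v => pg g (g v)].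
have PhiO : forall g, g \in Omega L -> Phi g \in Omega L.
  move=> g gO; have [gi gL] := OmP g gO; have [pC pE] := pgP g gO.
  rewrite inE /is_Lcol; apply/andP; split.
    by apply/injectiveP => v w; rewrite !ffunE => /perm_inj /gi.
  apply/forallP => v; rewrite ffunE.
  case vB: (v \in B); first by rewrite pE // tgtL.
  by apply: full; rewrite vB.
have PhiA : forall g, g \in Omega L -> forall u, u \in A -> Phi g u = xiA u.
  move=> g gO u uA; have [pC pE] := pgP g gO.
  by rewrite ffunE pE ?(subsetP AB) // /tgt uA.
have PhiX : forall g, g \in Omega L -> forall u, u \in B -> u \notin A -> Phi g u \notin X.
  move=> g gO u uB uA; have [pC pE] := pgP g gO.
  rewrite ffunE pE //.
  by case/andP: (tgtN g u uB uA).
exists (Phi @: Omega L); split.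
  have count : (#|Omega L| <= #|Phi @: Omega L| * K`!)%N.
    pose F g := (Phi g, pg g).
    have Fi : {in Omega L &, injective F}.
      move=> g g' gO g'O [E1 E2]; apply/ffunP => v.
      have h : Phi g v = Phi g' v by rewrite E1.
      by move: h; rewrite !ffunE E2; apply: perm_inj.
    rewrite -(card_in_imset Fi).
    have sub : F @: Omega L \subset setX (Phi @: Omega L) [set p | perm_on C0 p].
      apply/subsetP => z /imsetP[g gO ->]; rewrite inE /= (imset_f Phi gO) /= inE.
      exact: (pgP g gO).1.
    apply: leq_trans (subset_leq_card sub) _.
    rewrite cardsX cardsE card_perm leq_mul2l; apply/orP; right.
    exact: leq_fact.
  rewrite mul1r mulrC ler_pdivrMr ?ltr0n ?fact_gt0 // -natrM ler_nat.
  exact: count.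
move=> xi /imsetP[g gO ->].
have [gi gL] := OmP g gO.
have xO := PhiO g gO.
have [xiI _] := OmP _ xO.
have [ai _] := OmP _ Ha.
have [bi _] := OmP _ Hb.
have cB : forall u, constrained L (Some u) -> u \in B by move=> u; rewrite /= inE.
split => //.
- exact: PhiA.
- move=> H; have [u0 [u1 [u2 [u3 [[c0 c1 c2 c3] [e1 e2 e3] [n1 n2 n3]]]]]] := bad_chain (fun G => G H).
  have inA : forall u v, constrained L (Some u) -> constrained L (Some v) ->
      Phi g v = alpha u -> v \in A.
    move=> u v cu cv E; apply/negPn/negP => vA.
    have := PhiX g gO v (cB v cv) vA; rewrite E /X !inE (imset_f alpha (cB u cu)).
    by [].
  have u1A := inA _ _ c0 c1 e1.
  have u2A := inA _ _ c1 c2 e2.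
  case: (disj_le1 Hda u1A u2A n2) => E.
  + by move: n2; rewrite -(xiI u1 u2) ?eqxx // e2 E PhiA.
  + by move: n3; rewrite -(xiI u2 u3) ?eqxx // e3 E PhiA.
- move=> H; have [u0 [u1 [u2 [u3 [[c0 c1 c2 c3] [e1 e2 e3] [n1 n2 n3]]]]]] := bad_chain (fun G => G H).
  have inA : forall u v, constrained L (Some u) -> constrained L (Some v) ->
      beta v = Phi g u -> u \in A.
    move=> u v cu cv E; apply/negPn/negP => uA.
    have := PhiX g gO u (cB u cu) uA; rewrite -E /X !inE (imset_f beta (cB v cv)) orbT.
    by [].
  have u0A := inA _ _ c0 c1 e1.
  have u1A := inA _ _ c1 c2 e2.
  case: (disj_le1 Hdb u0A u1A n1) => E.
  + by move: n1; rewrite -(bi u0 u1) ?eqxx // e1 -E PhiA.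
  + by move: n2; rewrite -(bi u1 u2) ?eqxx // e2 -E PhiA.
Qed.
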